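(* Let $\delta\in(0,1)$ and assume every simplex of the triangulation $\mathcal T_h$ is non-obtuse (all dihedral angles $\le\pi/2$). Then for all $\mathbb B_h\in\mathcal W_h$ and all $K\in\mathcal T_h$, $$-\big(\nabla\mathbb B_h,\nabla\mathcal I_h\beta_\delta^{-1}(\mathbb B_h)\big)_{L^2(K)}\ \ge\ \frac1d\,\|\nabla\mathcal I_h\operatorname{tr}\ln\beta_\delta(\mathbb B_h)\|_{L^2(K)}^2=\frac1d\,\|\nabla\mathcal I_h\operatorname{tr}\ln\beta_\delta^{-1}(\mathbb B_h)\|_{L^2(K)}^2.$$
   Context: $\mathcal T_h$ is a conforming triangulation of a polyhedral domain $\Omega\subset\mathbb R^d$, $d\in\{2,3\}$, into simplices. $\mathcal W_h$ is the space of continuous functions $\overline\Omega\to\mathbb R^{d\times d}_{\mathrm S}$ (symmetric matrices) affine on each simplex; $\mathcal I_h$ is the nodal piecewise-linear interpolation at the mesh vertices (componentwise for matrices). For symmetric matrices, scalar functions act via the spectral decomposition; $\beta_\delta(s)=\max\{s,\delta\}$ and $\beta_\delta^{-1}(\mathbb B)$ denotes the matrix inverse of $\beta_\delta(\mathbb B)$. $(\nabla\mathbb A,\nabla\mathbb B)_{L^2(K)}=\int_K\sum_k\partial_{x_k}\mathbb A:\partial_{x_k}\mathbb B\,dx$. *)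

(* Defs.v *)
From HB Require Import structures.
From mathcomp Require Import all_boot all_order all_algebra.
From mathcomp Require Import all_classical all_reals all_analysis.
Set Implicit Arguments. Unset Strict Implicit. Unset Printing Implicit Defensive.
Import Order.TTheory GRing.Theory Num.Theory.
Local Open Scope ring_scope.

Section Simplex.
Variables (R : realType) (d : nat).
Variable x : 'I_d.+1 -> 'rV[R]_d.

Definition edge_mx : 'M[R]_d :=
  \matrix_(j < d, k < d) (x (lift ord0 j) 0 k - x ord0 0 k).

Definition simplex_nondegenerate : Prop := edge_mx \in unitmx.

Definition volK : R := `|\det edge_mx| / (d`!)%:R.

(* Barycentric coordinates: lambda_{j+1}(y) = ((y - x_0) E^{-1})_j,
   lambda_0 = 1 - sum_j lambda_{j+1}.  gradlam i k = d lambda_i / d y_k. *)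
Definition gradlam (i : 'I_d.+1) (k : 'I_d) : R :=
  match unlift ord0 i with
  | Some j => invmx edge_mx k j
  | None => - \sum_(j < d) invmx edge_mx k j
  end.

(* Partial derivative d/dy_k of the nodal P1 interpolant on K of scalar nodal
   values u_i (the interpolant is sum_i u_i lambda_i). *)
Definition dP1 (u : 'I_d.+1 -> R) (k : 'I_d) : R :=
  \sum_(i < d.+1) u i * gradlam i k.

Definition dP1mx (A : 'I_d.+1 -> 'M[R]_d) (k : 'I_d) : 'M[R]_d :=
  \sum_(i < d.+1) gradlam i k *: A i.

Definition frob (A B : 'M[R]_d) : R := \sum_(p < d) \sum_(q < d) A p q * B p q.

(* (grad A_h, grad B_h)_{L^2(K)} for the P1 interpolants of nodal values A, B;
   the integrand is constant on K, so the integral is |K| times it. *)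
Definition L2K_grad_inner (A B : 'I_d.+1 -> 'M[R]_d) : R :=
  volK * \sum_(k < d) frob (dP1mx A k) (dP1mx B k).

Definition L2K_grad_norm2 (u : 'I_d.+1 -> R) : R :=
  volK * \sum_(k < d) (dP1 u k) ^+ 2.

(* Inward unit normal of the facet opposite vertex i (grad lambda_i normalized)
   and the dihedral angle between the facets opposite i and j. *)
Definition vdot (u v : 'I_d -> R) : R := \sum_(k < d) u k * v k.
Definition inward_normal (i : 'I_d.+1) (k : 'I_d) : R :=
  gradlam i k / Num.sqrt (vdot (gradlam i) (gradlam i)).
Definition dihedral_angle (i j : 'I_d.+1) : R :=
  acos (- vdot (inward_normal i) (inward_normal j)).

Definition nonobtuse : Prop :=
  forall i j : 'I_d.+1, i != j -> dihedral_angle i j <= pi / 2.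

End Simplex.

(* Spectral calculus for symmetric matrices: if A = Q diag(l) Q^T with Q
   orthogonal, then f(A) := Q diag(f(l)) Q^T. *)
Definition orthogonal_mx (R : realType) (d : nat) (Q : 'M[R]_d) : Prop :=
  Q *m Q^T = 1%:M.

Definition spectral_decomp (R : realType) (d : nat)
    (A Q : 'M[R]_d) (l : 'rV[R]_d) : Prop :=
  orthogonal_mx Q /\ A = Q *m diag_mx l *m Q^T.

Definition mxfun (R : realType) (d : nat) (f : R -> R)
    (Q : 'M[R]_d) (l : 'rV[R]_d) : 'M[R]_d :=
  Q *m diag_mx (map_mx f l) *m Q^T.

Definition beta (R : realType) (delta s : R) : R := Num.max s delta.

(* Main.v *)
Require Import Defs.
From HB Require Import structures.
From mathcomp Require Import all_boot all_order all_algebra.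
From mathcomp Require Import all_classical all_reals all_analysis.
From mathcomp Require Import ring lra.
Import Order.TTheory GRing.Theory Num.Theory.
Local Open Scope ring_scope.

Lemma wcs {R : realFieldType} {T : finType} (w z : T -> R) :
  (forall i, 0 <= w i) -> 0 < \sum_i w i ->
  (\sum_i w i * z i) ^+ 2 <= (\sum_i w i) * \sum_i w i * z i ^+ 2.
Proof.
move=> w0 W0.
set W := \sum_i w i; set S := \sum_i w i * z i; set Z := \sum_i w i * z i ^+ 2.
pose m := S / W.
have H : 0 <= \sum_i w i * (z i - m) ^+ 2.
  by apply: sumr_ge0 => i _; rewrite mulr_ge0 ?sqr_ge0.
have E : \sum_i w i * (z i - m) ^+ 2 = Z - 2 * m * S + m ^+ 2 * W.
  rewrite /Z /S /W !mulr_sumr -sumrB -big_split /=; apply: eq_bigr => i _; ring.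
rewrite E /m in H.
have HW : W != 0 by rewrite gt_eqF.
have : 0 <= (Z - S ^+ 2 / W) by move: H; congr (0 <= _); field.
rewrite subr_ge0 ler_pdivrMr // => h; rewrite mulrC; exact: h.
Qed.

Lemma entry_spec {R : realType} {n} (P : 'M[R]_n) (a : 'rV[R]_n) p q :
  (P *m diag_mx a *m P^T) p q = \sum_k P p k * a 0 k * P q k.
Proof.
rewrite mul_mx_diag !mxE; apply: eq_bigr => k _; rewrite !mxE //.
Qed.

Lemma frob_spec {R : realType} {n} (P Q : 'M[R]_n) (a f : 'rV[R]_n) :
 frob (P *m diag_mx a *m P^T) (Q *m diag_mx f *m Q^T) =
 \sum_k \sum_l a 0 k * f 0 l * ((P^T *m Q) k l) ^+ 2.
Proof.
rewrite /frob.
transitivity (\sum_p \sum_q \sum_k \sum_l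
   (P p k * a 0 k * P q k) * (Q p l * f 0 l * Q q l)).
  by apply: eq_bigr => p _; apply: eq_bigr => q _; rewrite !entry_spec big_distrlr.
rewrite (eq_bigr _ (fun p _ => exchange_big _ _ _ _ _ _)) /= exchange_big /=.
under eq_bigr => k _ do (rewrite (eq_bigr _ (fun p _ => exchange_big _ _ _ _ _ _)) /= exchange_big /=).
apply: eq_bigr => k _; apply: eq_bigr => l _.
rewrite mxE expr2 big_distrlr mulr_sumr; apply: eq_bigr => p _.
rewrite mulr_sumr; apply: eq_bigr => q _; rewrite !mxE /=; ring.
Qed.

Lemma orthT {R : realType} {n} {P : 'M[R]_n} : P *m P^T = 1%:M -> P^T *m P = 1%:M.
Proof. exact: mulmx1C. Qed.

Lemma tr_spec {R : realType} {n} (P : 'M[R]_n) (g : 'rV[R]_n) :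
  P^T *m P = 1%:M -> \tr (P *m diag_mx g *m P^T) = \sum_k g 0 k.
Proof.
move=> H; rewrite mxtrace_mulC mulmxA H mul1mx mxtrace_diag //.
Qed.

Lemma rowsum {R : realType} {n} (P Q : 'M[R]_n) k :
  P^T *m P = 1%:M -> Q *m Q^T = 1%:M ->
  \sum_l ((P^T *m Q) k l) ^+ 2 = 1.
Proof.
move=> HP HQ.
have : ((P^T *m Q) *m (P^T *m Q)^T) k k = 1.
  by rewrite trmx_mul trmxK mulmxA -(mulmxA _ Q) HQ mulmx1 HP mxE eqxx.
rewrite mxE => <-; apply: eq_bigr => l _; by rewrite expr2 [X in _ = _ * X]mxE.
Qed.

Lemma colsum {R : realType} {n} (P Q : 'M[R]_n) l :
  P *m P^T = 1%:M -> Q^T *m Q = 1%:M ->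
  \sum_k ((P^T *m Q) k l) ^+ 2 = 1.
Proof.
move=> HP HQ.
have : ((P^T *m Q)^T *m (P^T *m Q)) l l = 1.
  by rewrite trmx_mul trmxK mulmxA -(mulmxA _ P) HP mulmx1 HQ mxE eqxx.
rewrite mxE => <-; apply: eq_bigr => k _; by rewrite expr2 [X in _ = X * _]mxE.
Qed.

Lemma frob_same {R : realType} {n} (P : 'M[R]_n) (a f : 'rV[R]_n) :
  P^T *m P = 1%:M ->
  frob (P *m diag_mx a *m P^T) (P *m diag_mx f *m P^T) = \sum_k a 0 k * f 0 k.
Proof.
move=> H; rewrite frob_spec H; apply: eq_bigr => k _.
rewrite (bigD1 k) //= big1 ?addr0; first by rewrite mxE eqxx expr1n mulr1.
by move=> l /negbTE kl; rewrite mxE eq_sym kl expr0n /= mulr0.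
Qed.

Lemma frobBl {R : realType} {n} (A C E : 'M[R]_n) : frob (A - C) E = frob A E - frob C E.
Proof.
rewrite /frob -sumrB; apply: eq_bigr => p _; rewrite -sumrB; apply: eq_bigr => q _.
rewrite !mxE; ring.
Qed.

Lemma frobBr {R : realType} {n} (A C E : 'M[R]_n) : frob E (A - C) = frob E A - frob E C.
Proof.
rewrite /frob -sumrB; apply: eq_bigr => p _; rewrite -sumrB; apply: eq_bigr => q _.
rewrite !mxE; ring.
Qed.
Lemma exp3 {R : realType} (x : R) : 0 <= x -> 1 + x + x ^+ 2 / 2 <= expR x.
Proof.
move=> x0.
have := @nondecreasing_cvgn_le R (series (exp_coeff x)) _ (is_cvg_series_exp_coeff x) 3.
rewrite /series /= /exp_coeff /=.
rewrite !big_nat_recr //= big_nil /= => H.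
have : 0 + x ^+ 0 / 0`!%:R + x ^+ 1 / 1`!%:R + x ^+ 2 / 2`!%:R <= expR x.
  apply: H.
  apply: nondecreasing_series => n _ _.
  by rewrite divr_ge0 // exprn_ge0.
by rewrite !expr0 !expr1 !add0r /= !divr1.
Qed.

Lemma sinh_ge {R : realType} (v : R) : 0 <= v -> 2 * v <= expR v - expR (- v).
Proof.
move=> v0; rewrite expRN.
have := @exp3 _ v v0; set A := 1 + v + _ => HA.
have A1 : 1 <= A by rewrite /A; have := sqr_ge0 v; lra.
have e0 := expR_gt0 v.
have : A - A^-1 <= expR v - (expR v)^-1.
  apply: lerB => //; rewrite lef_pV2 ?posrE //; lra.
apply: le_trans.
have A0 : 0 < A by lra.
rewrite -(ler_pM2r A0) mulrBl mulVf ?gt_eqF //.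
rewrite /A; have := sqr_ge0 v; have : 0 <= v ^+ 4 by rewrite exprn_ge0.
rewrite -[v ^+ 4](_ : v ^+ 2 * v ^+ 2 = _) ?(exprD _ 2 2) // => h1 h2.
nra.
Qed.

Lemma sinh_sq {R : realType} (v : R) : 4 * v ^+ 2 <= (expR v - expR (- v)) ^+ 2.
Proof.
wlog v0 : v / 0 <= v.
  move=> W; case: (lerP 0 v) => h; first exact: W.
  have := W (- v); rewrite opprK; have -> : (expR (- v) - expR v)^+2 = (expR v - expR (- v))^+2.
    by rewrite -sqrrN opprB.
  by rewrite sqrrN; apply; lra.
have := @sinh_ge _ v v0; nra.
Qed.

Lemma logmean {R : realType} {p q : R} : 0 < p -> 0 < q ->
  (ln p - ln q) ^+ 2 <= (p - q) ^+ 2 / (p * q).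
Proof.
move=> p0 q0.
set v := (ln p - ln q) / 2.
have Ep : p = expR (ln q) * expR v * expR v.
  rewrite -!expRD (_ : ln q + v + v = ln p); first by rewrite lnK // posrE.
  by rewrite /v; field.
have Eq : q = expR (ln q) by rewrite lnK // posrE.
have -> : ln p - ln q = 2 * v by rewrite /v; field.
have E0 := expR_gt0 v; have F0 := expR_gt0 (ln q).
rewrite Ep {2 4}Eq; set E := expR v; set F := expR (ln q).
have -> : (F * E * E - F) ^+ 2 / (F * E * E * F) = (E - E^-1) ^+ 2.
  by field; apply/andP; split; rewrite gt_eqF.
rewrite -expRN; have := @sinh_sq _ v; rewrite -/E.
move=> h; apply: le_trans h; rewrite exprMn; apply: ler_wpM2r; first exact: sqr_ge0.
by rewrite expr2; lra.
Qed.

Lemma beta_gt0 {R : realType} (delta s : R) : 0 < delta -> 0 < Num.max s delta.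
Proof. by move=> d0; rewrite lt_max d0 orbT. Qed.

Lemma beta_lip {R : realType} (delta a b : R) :
  0 <= (a - b - (Num.max a delta - Num.max b delta)) * (Num.max a delta - Num.max b delta).
Proof.
rewrite !maxEle; case: ifP => ha; case: ifP => hb; move: ha hb.
- move=> ha hb; lra.
- move=> ha /negbT; rewrite -ltNge => hb; nra.
- move=> /negbT; rewrite -ltNge => ha hb; nra.
- lra.
Qed.

Lemma scalar_ineq {R : realType} (delta a b : R) : 0 < delta ->
  (ln (Num.max a delta) - ln (Num.max b delta)) ^+ 2 <=
  (a - b) * ((Num.max b delta)^-1 - (Num.max a delta)^-1).
Proof.
move=> d0; have := beta_lip delta a b => /=.
have p0 := @beta_gt0 _ delta a d0; have q0 := @beta_gt0 _ delta b d0.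
move: (Num.max a delta) (Num.max b delta) p0 q0 => p q p0 q0 h.
apply: le_trans (logmean p0 q0 : _ <= _) _.
have -> : q^-1 - p^-1 = (p - q) / (p * q) by field; rewrite !gt_eqF.
rewrite mulrA ler_pM2r ?invr_gt0 ?mulr_gt0 //.
rewrite expr2; lra.
Qed.

Lemma mx_core {R : realType} {n : nat} (delta : R) (P Q : 'M[R]_n) (a b : 'rV[R]_n) :
  (0 < n)%N -> 0 < delta -> P *m P^T = 1%:M -> Q *m Q^T = 1%:M ->
  (\tr (mxfun (fun s => ln (beta delta s)) P a) - \tr (mxfun (fun s => ln (beta delta s)) Q b)) ^+ 2
  <= n%:R * frob (P *m diag_mx a *m P^T - Q *m diag_mx b *m Q^T)
          (mxfun (fun s => (beta delta s)^-1) Q b - mxfun (fun s => (beta delta s)^-1) P a).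
Proof.
move=> n0 d0 HP HQ.
have HP' := orthT HP; have HQ' := orthT HQ.
set g := fun s => ln (beta delta s); set f := fun s => (beta delta s)^-1.
pose w k l := ((P^T *m Q) k l) ^+ 2.
have w0 k l : 0 <= w k l by exact: sqr_ge0.
have rowE (h : 'I_n -> R) : \sum_k h k = \sum_k \sum_l w k l * h k.
  by apply: eq_bigr => k _; rewrite -mulr_suml rowsum // mul1r.
have colE (h : 'I_n -> R) : \sum_l h l = \sum_k \sum_l w k l * h l.
  by rewrite exchange_big /=; apply: eq_bigr => l _; rewrite -mulr_suml colsum // mul1r.
have Wn : \sum_k \sum_l w k l = n%:R.
  rewrite (eq_bigr (fun _ => 1)); last by move=> k _; rewrite rowsum.
  by rewrite sumr_const card_ord.
rewrite /mxfun !tr_spec //.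
have trE : \sum_k (map_mx g a) 0 k - \sum_k (map_mx g b) 0 k =
    \sum_k \sum_l w k l * (g (a 0 k) - g (b 0 l)).
  rewrite (rowE (fun k => map_mx g a 0 k)) (colE (fun l => map_mx g b 0 l)) -sumrB.
  apply: eq_bigr => k _; rewrite -sumrB; apply: eq_bigr => l _; rewrite !mxE; ring.
have frE : frob (P *m diag_mx a *m P^T - Q *m diag_mx b *m Q^T)
          (Q *m diag_mx (map_mx f b) *m Q^T - P *m diag_mx (map_mx f a) *m P^T) =
   \sum_k \sum_l w k l * ((a 0 k - b 0 l) * (f (b 0 l) - f (a 0 k))).
  rewrite !frobBl !frobBr frob_spec (frob_spec Q P) !frob_same //.
  rewrite (rowE (fun k => a 0 k * map_mx f a 0 k)) (colE (fun l => b 0 l * map_mx f b 0 l)).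
  rewrite [X in _ - _ - (_ - X)]exchange_big /=.
  have trQP k l : (Q^T *m P) l k = (P^T *m Q) k l.
    by rewrite -[Q^T *m P]trmxK trmx_mul trmxK mxE.
  rewrite -!sumrB; apply: eq_bigr => k _.
  rewrite -!sumrB; apply: eq_bigr => l _.
  rewrite trQP /w !mxE; ring.
rewrite trE frE.
have := @wcs R ('I_n * 'I_n)%type (fun p => w p.1 p.2) (fun p => g (a 0 p.1) - g (b 0 p.2)).
rewrite -pair_bigA /= Wn => H.
have {H} H := H (fun p => w0 _ _) (ltac:(by rewrite ltr0n)).
rewrite !pair_bigA /=.
apply: le_trans H _.
apply: ler_wpM2l; first by rewrite ler0n.
apply: ler_sum => p _; apply: ler_wpM2l => //.
exact: scalar_ineq.
Qed.
Lemma vdot_self_ge0 {R : realType} {n} (u : 'I_n -> R) : 0 <= vdot u u.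
Proof. by apply: sumr_ge0 => k _; rewrite -expr2 sqr_ge0. Qed.

Lemma unit_vdot {R : realType} {n} {u : 'I_n -> R} : 0 < vdot u u ->
  vdot (fun k => u k / Num.sqrt (vdot u u)) (fun k => u k / Num.sqrt (vdot u u)) = 1.
Proof.
move=> h; set s := Num.sqrt _.
have s0 : 0 < s by rewrite sqrtr_gt0.
have ss : s * s = vdot u u by rewrite -expr2 sqr_sqrtr // ltW.
rewrite /vdot (eq_bigr (fun k => (u k * u k) / (s * s))); last first.
  by move=> k _; field; rewrite gt_eqF.
rewrite -mulr_suml ss divff // gt_eqF //.
Qed.

Lemma unit_bound {R : realType} {n} {p q : 'I_n -> R} : vdot p p = 1 -> vdot q q = 1 ->
  -1 <= vdot p q <= 1.
Proof.
move=> hp hq.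
have h1 : 0 <= \sum_k (p k - q k) ^+ 2 by apply: sumr_ge0 => k _; exact: sqr_ge0.
have h2 : 0 <= \sum_k (p k + q k) ^+ 2 by apply: sumr_ge0 => k _; exact: sqr_ge0.
have e1 : \sum_k (p k - q k) ^+ 2 = vdot p p + vdot q q - 2 * vdot p q.
  rewrite /vdot mulr_sumr -big_split -sumrB /=; apply: eq_bigr => k _; ring.
have e2 : \sum_k (p k + q k) ^+ 2 = vdot p p + vdot q q + 2 * vdot p q.
  rewrite /vdot mulr_sumr -!big_split /=; apply: eq_bigr => k _; ring.
rewrite e1 hp hq in h1; rewrite e2 hp hq in h2.
apply/andP; split; lra.
Qed.

Lemma obtuse_c {R : realType} {n} (u v : 'I_n -> R) :
  acos (- vdot (fun k => u k / Num.sqrt (vdot u u)) (fun k => v k / Num.sqrt (vdot v v)))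
    <= pi / 2 -> vdot u v <= 0.
Proof.
move=> H.
have [hu|hu] := eqVneq (vdot u u) 0.
  have u0 k : u k = 0.
    move/eqP: hu; rewrite psumr_eq0 => [/allP hall|k' _]; last by rewrite -expr2 sqr_ge0.
    by have := hall k (mem_index_enum k); rewrite implyTb mulf_eq0 orbb => /eqP.
  by rewrite /vdot big1 // => k _; rewrite u0 mul0r.
have [hv|hv] := eqVneq (vdot v v) 0.
  have v0 k : v k = 0.
    move/eqP: hv; rewrite psumr_eq0 => [/allP hall|k' _]; last by rewrite -expr2 sqr_ge0.
    by have := hall k (mem_index_enum k); rewrite implyTb mulf_eq0 orbb => /eqP.
  by rewrite /vdot big1 // => k _; rewrite v0 mulr0.
have pu : 0 < vdot u u by rewrite lt_def hu vdot_self_ge0.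
have pv : 0 < vdot v v by rewrite lt_def hv vdot_self_ge0.
set su := Num.sqrt (vdot u u) in H *; set sv := Num.sqrt (vdot v v) in H *.
have su0 : 0 < su by rewrite sqrtr_gt0.
have sv0 : 0 < sv by rewrite sqrtr_gt0.
set y := vdot _ _ in H.
have Ey : y = vdot u v / (su * sv).
  rewrite /y /vdot mulr_suml; apply: eq_bigr => k _; field.
  by rewrite !gt_eqF.
have /andP[yl yu] := unit_bound (unit_vdot pu) (unit_vdot pv).
rewrite -/su -/sv -/y in yl yu.
have yB : -1 <= - y <= 1 by apply/andP; split; lra.
have [/andP[a0 api] ca] := acos_def yB.
have : 0 <= cos (acos (- y)).
  apply: cos_ge0_pihalf; apply/andP; split => //.
  apply: le_trans a0; by rewrite oppr_le0 divr_ge0 // pi_ge0.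
rewrite ca oppr_ge0 Ey pmulr_lle0 // invr_gt0 mulr_gt0 //.
Qed.
Lemma gradlam_sum {R : realType} {d} (x : 'I_d.+1 -> 'rV[R]_d) k :
  \sum_i gradlam x i k = 0.
Proof.
rewrite big_ord_recl /gradlam unlift_none.
rewrite addrC; apply/eqP; rewrite subr_eq0; apply/eqP.
apply: eq_bigr => j _.
have -> : unlift ord0 (lift ord0 j) = Some j by exact: liftK.
by [].
Qed.

Lemma frob_sum {R : realType} {n m} (s t : 'I_m -> R) (A C : 'I_m -> 'M[R]_n) :
  frob (\sum_i s i *: A i) (\sum_j t j *: C j) =
  \sum_i \sum_j s i * t j * frob (A i) (C j).
Proof.
rewrite /frob.
transitivity (\sum_p \sum_q \sum_i \sum_j (s i * A i p q) * (t j * C j p q)).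
  apply: eq_bigr => p _; apply: eq_bigr => q _; rewrite !summxE big_distrlr.
  by apply: eq_bigr => i _; apply: eq_bigr => j _; rewrite !mxE.
rewrite (eq_bigr _ (fun p _ => exchange_big _ _ _ _ _ _)) /= exchange_big /=.
under eq_bigr => i _ do (rewrite (eq_bigr _ (fun p _ => exchange_big _ _ _ _ _ _)) /= exchange_big /=).
apply: eq_bigr => i _; apply: eq_bigr => j _.
rewrite mulr_sumr; apply: eq_bigr => p _.
rewrite mulr_sumr; apply: eq_bigr => q _; ring.
Qed.

Definition cc {R : realType} {d} (x : 'I_d.+1 -> 'rV[R]_d) i j :=
  vdot (gradlam x i) (gradlam x j).

Lemma inner_cc {R : realType} {d} (x : 'I_d.+1 -> 'rV[R]_d) (A C : 'I_d.+1 -> 'M[R]_d) :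
  \sum_k frob (dP1mx x A k) (dP1mx x C k) = \sum_i \sum_j cc x i j * frob (A i) (C j).
Proof.
rewrite /dP1mx; under eq_bigr => k _ do rewrite frob_sum.
rewrite exchange_big; apply: eq_bigr => i _.
rewrite exchange_big; apply: eq_bigr => j _.
by rewrite /cc /vdot mulr_suml.
Qed.

Lemma norm_cc {R : realType} {d} (x : 'I_d.+1 -> 'rV[R]_d) (u : 'I_d.+1 -> R) :
  \sum_k (dP1 x u k) ^+ 2 = \sum_i \sum_j cc x i j * (u i * u j).
Proof.
rewrite /dP1; under eq_bigr => k _ do rewrite expr2 big_distrlr.
rewrite exchange_big; apply: eq_bigr => i _ /=.
rewrite exchange_big; apply: eq_bigr => j _ /=.
rewrite /cc /vdot mulr_suml; apply: eq_bigr => k _; ring.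
Qed.

Lemma sym_id {R : realType} {m} (c F : 'I_m -> 'I_m -> R) :
  (forall i j, c i j = c j i) -> (forall i, \sum_j c i j = 0) ->
  \sum_i \sum_j c i j * F i j =
  - 2^-1 * \sum_i \sum_j c i j * (F i i + F j j - F i j - F j i).
Proof.
move=> cs c0.
have e1 : \sum_i \sum_j c i j * F i i = 0.
  by rewrite big1 // => i _; rewrite -mulr_suml c0 mul0r.
have e2 : \sum_i \sum_j c i j * F j j = 0.
  rewrite exchange_big big1 // => j _ /=; rewrite -mulr_suml.
  by rewrite (eq_bigr (fun i => c j i)) ?c0 ?mul0r // => i _; rewrite cs.
have e3 : \sum_i \sum_j c i j * F j i = \sum_i \sum_j c i j * F i j.
  rewrite exchange_big; apply: eq_bigr => i _; apply: eq_bigr => j _ /=.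
  by rewrite cs.
have -> : \sum_i \sum_j c i j * (F i i + F j j - F i j - F j i) =
  \sum_i \sum_j c i j * F i i + \sum_i \sum_j c i j * F j j
  - \sum_i \sum_j c i j * F i j - \sum_i \sum_j c i j * F j i.
  rewrite -[in RHS]big_split -[in RHS]sumrB -[in RHS]sumrB; apply: eq_bigr => i _ /=.
  rewrite -[in RHS]big_split -[in RHS]sumrB -[in RHS]sumrB; apply: eq_bigr => j _ /=; ring.
rewrite e1 e2 e3; lra.
Qed.

Theorem lemma2p4 (R : realType) (d : nat) (delta : R)
  (x : 'I_d.+1 -> 'rV[R]_d)
  (B : 'I_d.+1 -> 'M[R]_d) (Q : 'I_d.+1 -> 'M[R]_d) (l : 'I_d.+1 -> 'rV[R]_d) :
  (d = 2%N \/ d = 3%N) ->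
  0 < delta < 1 ->
  simplex_nondegenerate x ->
  nonobtuse x ->
  (forall i, spectral_decomp (B i) (Q i) (l i)) ->
  let Binv := fun i => mxfun (fun s => (beta delta s)^-1) (Q i) (l i) in
  let trlnB := fun i => \tr (mxfun (fun s => ln (beta delta s)) (Q i) (l i)) in
  let trlnBinv := fun i => \tr (mxfun (fun s => ln ((beta delta s)^-1)) (Q i) (l i)) in
  - L2K_grad_inner x B Binv >= (d%:R)^-1 * L2K_grad_norm2 x trlnB /\
  (d%:R)^-1 * L2K_grad_norm2 x trlnB = (d%:R)^-1 * L2K_grad_norm2 x trlnBinv.
Proof.
move=> hd /andP[dl0 _] _ hobt hsp Binv trlnB trlnBinv.
have d0 : (0 < d)%N by case: hd => ->.
have cs i j : cc x i j = cc x j i.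
  by rewrite /cc /vdot; apply: eq_bigr => k _; rewrite mulrC.
have c0 i : \sum_j cc x i j = 0.
  rewrite /cc /vdot exchange_big /=.
  by rewrite big1 // => k _; rewrite -mulr_sumr gradlam_sum mulr0.
have cneg i j : i != j -> cc x i j <= 0.
  by move=> hij; exact: (obtuse_c (gradlam x i) (gradlam x j) (hobt i j hij)).
have vol0 : 0 <= volK x by rewrite /volK divr_ge0 // ler0n.
split; last first.
  have Einv i : trlnBinv i = - trlnB i.
    have [hQ _] := hsp i.
    rewrite /trlnBinv /trlnB /mxfun !tr_spec ?(orthT hQ) // -sumrN.
    apply: eq_bigr => k _; rewrite !mxE lnV // posrE.
    by rewrite /beta lt_max dl0 orbT.
  rewrite /L2K_grad_norm2 !norm_cc; congr (_ * (_ * _)).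
  apply: eq_bigr => i _; apply: eq_bigr => j _; rewrite !Einv; ring.
rewrite /L2K_grad_inner /L2K_grad_norm2 inner_cc norm_cc.
rewrite (sym_id (cc x) (fun i j => frob (B i) (Binv j)) cs c0).
rewrite (sym_id (cc x) (fun i j => trlnB i * trlnB j) cs c0) /=.
set T1 := \sum_i \sum_j cc x i j * (frob (B i) (Binv i) + _ - _ - _).
set T2 := \sum_i \sum_j cc x i j * (trlnB i * trlnB i + _ - _ - _).
have key : T2 * - (d%:R)^-1 <= T1.
  rewrite /T1 /T2 mulr_suml; apply: ler_sum => i _.
  rewrite mulr_suml; apply: ler_sum => j _.
  have [<-|hij] := eqVneq i j.
    have -> : trlnB i * trlnB i + trlnB i * trlnB i - trlnB i * trlnB i
      - trlnB i * trlnB i = 0 by ring.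
    have -> : frob (B i) (Binv i) + frob (B i) (Binv i) - frob (B i) (Binv i)
      - frob (B i) (Binv i) = 0 by ring.
    by rewrite !mulr0 mul0r.
  have [hQi hBi] := hsp i; have [hQj hBj] := hsp j.
  have M := mx_core delta (Q i) (Q j) (l i) (l j) d0 dl0 hQi hQj.
  rewrite -hBi -hBj -/(Binv i) -/(Binv j) -/(trlnB i) -/(trlnB j) in M.
  rewrite frobBl !frobBr in M.
  have cn := cneg i j hij.
  set D := frob (B i) (Binv j) - frob (B i) (Binv i) - (frob (B j) (Binv j) - frob (B j) (Binv i)) in M.
  have -> : frob (B i) (Binv i) + frob (B j) (Binv j) - frob (B i) (Binv j) - frob (B j) (Binv i) = - D
    by rewrite /D; ring.
  have -> : trlnB i * trlnB i + trlnB j * trlnB j - trlnB i * trlnB j - trlnB j * trlnB i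
    = (trlnB i - trlnB j) ^+ 2 by ring.
  have dpos : 0 < (d%:R : R) by rewrite ltr0n.
  have : (trlnB i - trlnB j) ^+ 2 / d%:R <= D.
    by rewrite -(ler_pM2l dpos) mulrCA divff ?gt_eqF // mulr1.
  move: ((trlnB i - trlnB j) ^+ 2) => Y hY.
  have -> : cc x i j * Y * - (d%:R)^-1 = (- cc x i j) * (Y / d%:R) by ring.
  have -> : cc x i j * - D = (- cc x i j) * D by ring.
  by apply: ler_wpM2l => //; rewrite oppr_ge0.
have -> : (d%:R)^-1 * (volK x * (- 2^-1 * T2)) = volK x * 2^-1 * (T2 * - (d%:R)^-1) by ring.
have -> : - (volK x * (- 2^-1 * T1)) = volK x * 2^-1 * T1 by ring.
by apply: ler_wpM2l => //; rewrite mulr_ge0 // invr_ge0 ler0n.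
Qed.
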